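(* Let $\mathcal{D}$ be a dagger category. (1) $\mathcal{D}$ is maximal if and only if every self-adjoint automorphism is iso-positive. (2) $\mathcal{D}$ is minimal if and only if every iso-positive endomorphism is aut-positive.
   Context: A dagger category is a category with an identity-on-objects functor $\dagger$ to its opposite with $f^{\dagger\dagger}=f$. $f$ is self-adjoint if $f^\dagger=f$; an isomorphism $u$ is unitary if $u^\dagger=u^{-1}$. An endomorphism $f\colon c\to c$ is iso-positive if $f=g^\dagger g$ for some isomorphism $g\colon c\to c'$, aut-positive if $f=g^\dagger g$ for some automorphism $g$ of $c$. $\mathcal{D}$ is minimal if the map from unitary-isomorphism classes of objects to isomorphism classes of objects is bijective. $\mathcal{D}$ is maximal if it is dagger-equivalent to a Hermitian completion $\mathrm{Herm}\,\mathcal{C}$ of an anti-involutive category $(\mathcal{C},d,\eta)$ (where $d\colon\mathcal{C}\to\mathcal{C}^{\mathrm{op}}$, $\eta\colon\mathrm{id}\Rightarrow d^2$ with $d(\eta_c)\circ\eta_{dc}=\mathrm{id}$; $\mathrm{Herm}\,\mathcal{C}$ has objects pairs $(c,h)$ with $h\colon c\to dc$ an isomorphism satisfying $d(h)\circ\eta_c=h$, morphisms all morphisms of $\mathcal{C}$, and dagger $f^\dagger=h_1^{-1}\circ d(f)\circ h_2$). *)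

(* Defs.v *)
From Stdlib Require Import Setoid.
Set Implicit Arguments.

(** * Categories (hom-types with Leibniz equality of morphisms) *)
Record Category := {
  Ob :> Type;
  Hom : Ob -> Ob -> Type;
  idm : forall a, Hom a a;
  comp : forall a b c, Hom b c -> Hom a b -> Hom a c;
  comp_idl : forall a b (f : Hom a b), comp (idm b) f = f;
  comp_idr : forall a b (f : Hom a b), comp f (idm a) = f;
  comp_assoc : forall a b c e (f : Hom a b) (g : Hom b c) (h : Hom c e),
      comp h (comp g f) = comp (comp h g) f
}.
Arguments Hom {_} a b.
Arguments idm {_} a.
Arguments comp {_ _ _ _} g f.
Arguments comp_idl {_ _ _} f.
Arguments comp_idr {_ _ _} f.
Arguments comp_assoc {_ _ _ _ _} f g h.

Definition is_iso {C : Category} {a b : C} (f : Hom a b) : Prop :=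
  exists g : Hom b a, comp g f = idm a /\ comp f g = idm b.

Record DaggerCategory := {
  dcat :> Category;
  dag : forall a b : dcat, Hom a b -> Hom b a;
  dag_id : forall a : dcat, dag a a (idm a) = idm a;
  dag_comp : forall (a b c : dcat) (f : Hom a b) (g : Hom b c),
      dag a c (comp g f) = comp (dag a b f) (dag b c g);
  dag_invol : forall (a b : dcat) (f : Hom a b), dag b a (dag a b f) = f
}.
Arguments dag {d a b} f.

Section DaggerNotions.
Variable D : DaggerCategory.

Definition self_adjoint {a : D} (f : Hom a a) : Prop := dag f = f.

Definition unitary {a b : D} (u : Hom a b) : Prop :=
  comp (dag u) u = idm a /\ comp u (dag u) = idm b.

Definition isomorphic (a b : D) : Prop := exists f : Hom a b, is_iso f.
Definition unitarily_isomorphic (a b : D) : Prop := exists u : Hom a b, unitary u.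

Definition iso_positive {c : D} (f : Hom c c) : Prop :=
  exists (c' : D) (g : Hom c c'), is_iso g /\ f = comp (dag g) g.

Definition aut_positive {c : D} (f : Hom c c) : Prop :=
  exists g : Hom c c, is_iso g /\ f = comp (dag g) g.

(** The canonical map {objects}/(unitary iso) -> {objects}/(iso), [a] |-> [a],
    is bijective: injective and surjective, written out on representatives. *)
Definition minimal : Prop :=
  (forall a b : D, isomorphic a b -> unitarily_isomorphic a b) /\
  (forall a : D, exists b : D, isomorphic b a).
End DaggerNotions.
Arguments self_adjoint {D a} f.
Arguments unitary {D a b} u.
Arguments isomorphic {D} a b.
Arguments unitarily_isomorphic {D} a b.
Arguments iso_positive {D c} f.
Arguments aut_positive {D c} f.

Record AntiInvolution (C : Category) := {
  dob : C -> C;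
  dmap : forall a b : C, Hom a b -> Hom (dob b) (dob a);
  dmap_id : forall a : C, dmap a a (idm a) = idm (dob a);
  dmap_comp : forall (a b c : C) (f : Hom a b) (g : Hom b c),
      dmap a c (comp g f) = comp (dmap a b f) (dmap b c g);
  eta : forall a : C, Hom a (dob (dob a));
  eta_nat : forall (a b : C) (f : Hom a b),
      comp (dmap _ _ (dmap a b f)) (eta a) = comp (eta b) f;
  eta_triangle : forall a : C,
      comp (dmap _ _ (eta a)) (eta (dob a)) = idm (dob a)
}.
Arguments dob {C} _ a.
Arguments dmap {C} _ {a b} f.
Arguments eta {C} _ a.

Section Herm.
Variables (C : Category) (A : AntiInvolution C).

Record HermObj := {
  hc : C;
  hh : Hom hc (dob A hc);
  hinv : Hom (dob A hc) hc;
  hinv_hh : comp hinv hh = idm hc;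
  hh_hinv : comp hh hinv = idm (dob A hc);
  hh_herm : comp (dmap A hh) (eta A hc) = hh
}.

Definition HermCat : Category.
Proof.
  refine {| Ob := HermObj;
            Hom := fun x y => @Hom C (hc x) (hc y);
            idm := fun x => idm (hc x);
            comp := fun x y z g f => comp g f |}.
  - intros; apply comp_idl.
  - intros; apply comp_idr.
  - intros; apply comp_assoc.
Defined.

Definition herm_dag (x y : HermCat) (f : Hom x y) : Hom y x :=
  @comp C _ _ _ (hinv x) (@comp C _ _ _ (dmap A f) (hh y)).

Lemma dmap_iso_l (x : HermObj) :
  comp (dmap A (hinv x)) (dmap A (hh x)) = idm (dob A (dob A (hc x))).
Proof. rewrite <- dmap_comp, hh_hinv, dmap_id. reflexivity. Qed.

Lemma dmap_iso_r (x : HermObj) :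
  comp (dmap A (hh x)) (dmap A (hinv x)) = idm (dob A (hc x)).
Proof. rewrite <- dmap_comp, hinv_hh, dmap_id. reflexivity. Qed.

Lemma eta_herm (x : HermObj) : eta A (hc x) = comp (dmap A (hinv x)) (hh x).
Proof.
  rewrite <- (hh_herm x) at 1. rewrite comp_assoc, dmap_iso_l, comp_idl.
  reflexivity.
Qed.

Lemma eta_herm_inv (x : HermObj) :
  comp (comp (hinv x) (dmap A (hh x))) (eta A (hc x)) = idm (hc x).
Proof. rewrite <- comp_assoc, hh_herm, hinv_hh. reflexivity. Qed.

Lemma eta_herm_inv' (x : HermObj) :
  comp (eta A (hc x)) (comp (hinv x) (dmap A (hh x))) = idm _.
Proof.
  rewrite eta_herm, comp_assoc, <- (comp_assoc (hinv x)), hh_hinv, comp_idr.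
  apply dmap_iso_l.
Qed.

Definition Herm : DaggerCategory.
Proof.
  refine {| dcat := HermCat; dag := herm_dag |}.
  - intros a. unfold herm_dag; simpl.
    rewrite dmap_id, comp_idl. apply hinv_hh.
  - intros a b c f g. unfold herm_dag; simpl.
    rewrite dmap_comp.
    rewrite <- !comp_assoc. f_equal. f_equal.
    rewrite (comp_assoc _ (hinv b) (hh b)), hh_hinv, comp_idl. reflexivity.
  - intros a b f. unfold herm_dag; simpl.
    rewrite !dmap_comp.
    rewrite <- !comp_assoc.
    rewrite <- (eta_herm a), eta_nat.
    rewrite !comp_assoc, eta_herm_inv.
    apply comp_idl.
Defined.
End Herm.

Record DaggerFunctor (D E : DaggerCategory) := {
  fob : D -> E;
  fmap : forall a b : D, Hom a b -> Hom (fob a) (fob b);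
  fmap_id : forall a : D, fmap a a (idm a) = idm (fob a);
  fmap_comp : forall (a b c : D) (f : Hom a b) (g : Hom b c),
      fmap a c (comp g f) = comp (fmap b c g) (fmap a b f);
  fmap_dag : forall (a b : D) (f : Hom a b), fmap b a (dag f) = dag (fmap a b f)
}.
Arguments fob {D E} _ a.
Arguments fmap {D E} _ {a b} f.

Definition dagger_equivalence {D E : DaggerCategory} (F : DaggerFunctor D E) : Prop :=
  (forall (a b : D) (g : Hom (fob F a) (fob F b)), exists f : Hom a b, fmap F f = g) /\
  (forall (a b : D) (f f' : Hom a b), fmap F f = fmap F f' -> f = f') /\
  (forall e : E, exists (a : D) (u : Hom (fob F a) e), unitary u).

Definition dagger_equivalent (D E : DaggerCategory) : Prop :=
  exists F : DaggerFunctor D E, dagger_equivalence F.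

Definition maximal (D : DaggerCategory) : Prop :=
  exists (C : Category) (A : AntiInvolution C), dagger_equivalent D (Herm A).

(* Main.v *)
Require Import Defs.

Lemma iso_left_inv {C : Category} {a b : C} (g : Hom a b) (k : Hom b a) :
  is_iso g -> comp k g = idm a -> comp g k = idm b.
Proof.
  intros [gi [H1 H2]] H.
  assert (k = gi).
  { rewrite <- (comp_idr k), <- H2, comp_assoc, H, comp_idl. reflexivity. }
  subst. exact H2.
Qed.

Lemma canc {C : Category} {a b d : C} (h : Hom a d) (x : Hom b a) (y : Hom a b) :
  comp x y = idm a -> comp (comp h x) y = h.
Proof. intros H. rewrite <- comp_assoc, H, comp_idr. reflexivity. Qed.

Ltac lassoc := repeat rewrite comp_assoc.

Lemma part2 (D : DaggerCategory) :
  (minimal D <->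
     forall (c : D) (f : Hom c c), iso_positive f -> aut_positive f).
Proof.
  split.
  - intros [Hm _] c f [c' [g [Hg ->]]].
    destruct (Hm c c' (ex_intro _ g Hg)) as [u [Hu1 Hu2]].
    destruct Hg as [gi [Hg1 Hg2]].
    exists (comp (dag u) g). split.
    + exists (comp gi u). split.
      * lassoc. rewrite (canc _ _ _ Hu2). exact Hg1.
      * lassoc. rewrite (canc _ _ _ Hg2). exact Hu1.
    + rewrite dag_comp, dag_invol. lassoc. rewrite (canc _ _ _ Hu2). reflexivity.
  - intros H. split.
    + intros a b [g Hg].
      destruct (H a (comp (dag g) g) (ex_intro _ b (ex_intro _ g (conj Hg eq_refl))))
        as [h [[hi [Hh1 Hh2]] Heq]].
      destruct Hg as [gi [Hg1 Hg2]].
      assert (Hu : comp (dag (comp g hi)) (comp g hi) = idm a).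
      { rewrite dag_comp, <- comp_assoc, (comp_assoc hi g), Heq.
        lassoc. rewrite <- dag_comp, Hh2, dag_id, comp_idl. exact Hh2. }
      exists (comp g hi). split; [exact Hu|].
      apply iso_left_inv; [|exact Hu].
      exists (comp h gi). split.
      * lassoc. rewrite (canc _ _ _ Hg1). exact Hh2.
      * lassoc. rewrite (canc _ _ _ Hh1). exact Hg2.
    + intros a. exists a. exists (idm a). exists (idm a). split; apply comp_idl.
Qed.

Definition dagAI (D : DaggerCategory) : AntiInvolution (dcat D).
Proof.
  refine {| dob := fun a => a;
            dmap := fun a b f => @dag D a b f;
            eta := fun a => idm a |}.
  - intros; apply dag_id.
  - intros; apply dag_comp.
  - intros. simpl. rewrite dag_invol, comp_idr, comp_idl. reflexivity.
  - intros. simpl. rewrite dag_id. apply comp_idl.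
Defined.

Definition embObj (D : DaggerCategory) (a : D) : HermObj (dagAI D).
Proof.
  refine (@Build_HermObj (dcat D) (dagAI D) a (idm a) (idm a) _ _ _); simpl.
  - apply comp_idl.
  - apply comp_idl.
  - rewrite dag_id. apply comp_idl.
Defined.

Definition embF (D : DaggerCategory) : DaggerFunctor D (Herm (dagAI D)).
Proof.
  refine (@Build_DaggerFunctor D (Herm (dagAI D)) (embObj D) (fun a b f => f) _ _ _).
  - reflexivity.
  - reflexivity.
  - intros a b f. simpl. unfold herm_dag. simpl. rewrite comp_idl, comp_idr. reflexivity.
Defined.

Lemma part1_back (D : DaggerCategory) :
  (forall (c : D) (f : Hom c c), self_adjoint f -> is_iso f -> iso_positive f) ->
  maximal D.
Proof.
  intros H. exists (dcat D), (dagAI D), (embF D).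
  split; [|split].
  - intros a b g. exists g. reflexivity.
  - intros a b f f' E. exact E.
  - intros e.
    assert (Hsa : @self_adjoint D (hc e) (hh e)).
    { unfold self_adjoint. pose proof (hh_herm e) as He. simpl in He.
      rewrite comp_idr in He. exact He. }
    assert (Hiso : @is_iso (dcat D) (hc e) (hc e) (hh e)).
    { exists (hinv e). split; [exact (hinv_hh e) | exact (hh_hinv e)]. }
    destruct (H _ _ Hsa Hiso) as [c' [g [[gi [Hg1 Hg2]] Heq]]].
    exists c'. exists gi. unfold unitary. simpl. unfold herm_dag. simpl.
    rewrite comp_idl. change (@hh D (dagAI D) e) with (hh e) in *.
    assert (Hd : comp (dag gi) (hh e) = g).
    { rewrite Heq, comp_assoc, <- dag_comp, Hg2, dag_id, comp_idl. reflexivity. }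
    rewrite Hd. split; assumption.
Qed.

Definition twistObj {C : Category} (A : AntiInvolution C) (X : HermObj A)
  (p pi : Hom (hc X) (hc X)) (H1 : comp p pi = idm _) (H2 : comp pi p = idm _)
  (Hs : comp (dmap A p) (hh X) = comp (hh X) p) : HermObj A.
Proof.
  refine (@Build_HermObj C A (hc X) (comp (hh X) p) (comp pi (hinv X)) _ _ _).
  - lassoc. rewrite (canc _ _ _ (hinv_hh X)). exact H2.
  - lassoc. rewrite (canc _ _ _ H1). exact (hh_hinv X).
  - rewrite dmap_comp, <- comp_assoc, hh_herm. exact Hs.
Defined.

Lemma part1_fwd (D : DaggerCategory) :
  maximal D ->
  (forall (c : D) (f : Hom c c), self_adjoint f -> is_iso f -> iso_positive f).
Proof.
  intros [C [A [F [Hfull [Hfaith Hess]]]]] c f Hsa [fi [Hf1 Hf2]].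
  set (X := fob F c).
  set (p := fmap F f : @Hom C (hc X) (hc X)).
  set (pi := fmap F fi : @Hom C (hc X) (hc X)).
  assert (H1 : comp p pi = idm (hc X)).
  { unfold p, pi. etransitivity; [symmetry; exact (fmap_comp F _ _ _ fi f)|].
    rewrite Hf2. exact (fmap_id F c). }
  assert (H2 : comp pi p = idm (hc X)).
  { unfold p, pi. etransitivity; [symmetry; exact (fmap_comp F _ _ _ f fi)|].
    rewrite Hf1. exact (fmap_id F c). }
  assert (Hs : comp (dmap A p) (hh X) = comp (hh X) p).
  { assert (E : @herm_dag C A X X p = p).
    { unfold p. change (@herm_dag C A X X) with (@dag (Herm A) X X).
      etransitivity; [symmetry; exact (fmap_dag F _ _ f)|].
      rewrite Hsa. reflexivity. }
    unfold herm_dag in E.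
    transitivity (comp (hh X) (comp (hinv X) (comp (dmap A p) (hh X)))).
    - lassoc. rewrite (hh_hinv X), comp_idl. reflexivity.
    - rewrite E. reflexivity. }
  set (Y := twistObj A X p pi H1 H2 Hs).
  destruct (Hess Y) as [a [u [Hu1 Hu2]]].
  set (i := (idm (hc X) : @Hom (Herm A) X Y)).
  set (j := (idm (hc X) : @Hom (Herm A) Y X)).
  assert (Hi : @dag (Herm A) X Y i = p).
  { simpl. unfold herm_dag. simpl. rewrite dmap_id, comp_idl. lassoc.
    rewrite (hinv_hh X), comp_idl. reflexivity. }
  set (k := @comp (Herm A) _ _ _ (dag u) i).
  set (kinv := @comp (Herm A) _ _ _ j u).
  destruct (Hfull _ _ k) as [g Hg].
  destruct (Hfull _ _ kinv) as [g' Hg'].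
  exists a, g. split.
  - exists g'. split.
    + apply Hfaith. rewrite (fmap_comp F), (fmap_id F), Hg, Hg'.
      unfold kinv, k, j, i. simpl. rewrite comp_idl, comp_idr.
      exact Hu2.
    + apply Hfaith. rewrite (fmap_comp F), (fmap_id F), Hg, Hg'.
      unfold kinv, k, j, i. simpl. rewrite comp_idr.
      rewrite comp_idl. exact Hu1.
  - apply Hfaith. rewrite (fmap_comp F), (fmap_dag F), Hg.
    unfold k. rewrite (dag_comp (Herm A)), (dag_invol (Herm A)).
    rewrite Hi, (@comp_assoc (Herm A)), (canc _ _ _ Hu2). exact (eq_sym (comp_idr p)).
Qed.

Theorem mainTheorem10 (D : DaggerCategory) :
  (maximal D <->
     forall (c : D) (f : Hom c c), self_adjoint f -> is_iso f -> iso_positive f) /\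
  (minimal D <->
     forall (c : D) (f : Hom c c), iso_positive f -> aut_positive f).
Proof.
  split; [split; [apply part1_fwd | apply part1_back] | apply part2].
Qed.
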